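(* Let $K$ be a compact Hausdorff space and let $(f_n)_{n\in\mathbb{N}}$ be a pairwise disjoint sequence in $C_1(K)$. Suppose there exists a closed set $L\subseteq K$ such that $supp(f_n)\subseteq L$ for all $n\in\mathbb{N}$. Then $$K((f_n)_{n\in\mathbb{N}})=L((f_n|L)_{n\in\mathbb{N}})\cup\left(\overline{K\setminus L}\right)\times\{0\},$$ where $L((f_n|L)_{n\in\mathbb{N}})\subseteq L\times[0,1]$ is regarded as a subset of $K\times[0,1]$.
   Context: All spaces are Hausdorff. For a compact space $K$, $C_1(K)$ denotes the set of continuous functions $K\to[0,1]$; $f,g$ are disjoint if $f\cdot g=0$. For a real function $f$ on $K$, $supp(f)$ is the closure of $\{x\in K: f(x)\neq 0\}$. For a pairwise disjoint sequence $(f_n)_{n\in\mathbb{N}}$ in $C_1(K)$, let $D((f_n)_{n\in\mathbb{N}})$ be the union of all open sets $U\subseteq K$ such that $\{n: U\cap supp(f_n)\neq\emptyset\}$ is finite. The extension of $K$ by $(f_n)_{n\in\mathbb{N}}$, denoted $K((f_n)_{n\in\mathbb{N}})$, is the closure in $K\times[0,1]$ of the graph of the function $\sum_{n\in\mathbb{N}} f_n$ restricted to $D((f_n)_{n\in\mathbb{N}})$. *)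

(* Defs.v *)
From HB Require Import structures.
From mathcomp Require Import all_boot all_order all_algebra.
From mathcomp Require Import all_classical all_reals all_analysis.
Set Implicit Arguments. Unset Strict Implicit. Unset Printing Implicit Defensive.
Import Order.TTheory GRing.Theory Num.Theory numFieldNormedType.Exports.
Local Open Scope classical_set_scope.
Local Open Scope ring_scope.

Section Ext.
Context {R : realType} {T : topologicalType}.

Definition in_C1 (f : T -> R) : Prop :=
  continuous f /\ (forall x, 0 <= f x <= 1).

Definition disjoint_seq (f : nat -> T -> R) : Prop :=
  forall n m, n <> m -> forall x, f n x * f m x = 0.

(* support of g relative to the subspace A (closure taken in A) of g|A;
   for A = setT this is the usual support *)
Definition supp_in (A : set T) (g : T -> R) : set T :=
  A `&` closure [set x | A x /\ g x != 0].

Definition supp (g : T -> R) : set T := closure [set x | g x != 0].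

(* D((f_n|A)_n) computed in the space A: union of relatively open U of A
   meeting only finitely many supports *)
Definition Dset_in (A : set T) (f : nat -> T -> R) : set T :=
  [set x | exists U : set T, [/\ (exists V, open V /\ U = V `&` A), U x &
     finite_set [set n | U `&` supp_in A (f n) !=set0] ] ].

Definition sumf (f : nat -> T -> R) (x : T) : R := limn (series (fun n => f n x)).

(* A((f_n|A)_n): closure in A x [0,1] of the graph of sum f_n on D *)
Definition ext_in (A : set T) (f : nat -> T -> R) : set (T * R) :=
  [set p | (A p.1 /\ 0 <= p.2 <= 1) /\
     closure [set q | Dset_in A f q.1 /\ q.2 = sumf f q.1] p].

Definition ext (f : nat -> T -> R) : set (T * R) := ext_in setT f.

End Ext.

(* Main.v *)
Require Import Defs.
From HB Require Import structures.
From mathcomp Require Import all_boot all_order all_algebra.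
From mathcomp Require Import all_classical all_reals all_analysis.
Import Order.TTheory GRing.Theory Num.Theory numFieldNormedType.Exports.
Local Open Scope classical_set_scope.
Local Open Scope ring_scope.

Theorem lemma4p3 (R : realType) (K : topologicalType)
  (hK : compact [set: K]) (hH : hausdorff_space K)
  (f : nat -> K -> R) (hf : forall n, in_C1 (f n)) (hdisj : disjoint_seq f)
  (L : set K) (hL : closed L) (hsupp : forall n, supp (f n) `<=` L) :
  ext f = ext_in L f `|` (closure (~` L)) `*` [set (0 : R)].
Proof.
have hnz : forall n x, f n x != 0 -> L x.
  by move=> n x hx; apply: (hsupp n); apply: subset_closure.
have hf0 : forall n x, ~ L x -> f n x = 0.
  move=> n x nL; apply/eqP; rewrite -[_ == _]negbK; apply/negP => h; exact: nL (hnz n x h).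
have hsum : forall x, ~ L x -> sumf f x = 0.
  move=> x nL; rewrite /sumf.
  have -> : series (fun n => f n x) = fun=> 0.
    apply/funext => n; rewrite /series /=; apply: big1 => k _; exact: hf0.
  exact: lim_cst.
have hsuppin : forall (A : set K) n, L `<=` A -> supp_in A (f n) = A `&` supp (f n).
  move=> A n LA; rewrite /supp_in /supp; congr (_ `&` closure _).
  apply/seteqP; split => x /=; first by case.
  by move=> h; split => //; apply: LA; exact: (hnz n).
pose GT := [set q : K * R | Dset_in setT f q.1 /\ q.2 = sumf f q.1].
pose GL := [set q : K * R | Dset_in L f q.1 /\ q.2 = sumf f q.1].
pose Z := [set q : K * R | ~ L q.1 /\ q.2 = 0].
have GLT : GL `<=` GT.
  move=> q [[U [[V [oV ->]] [Vq Lq] fin]] e]; split => //.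
  exists V; split => //; first by exists V; rewrite setIT.
  apply: sub_finite_set fin => n /= [y [Vy]].
  rewrite (hsuppin setT n) // => -[_ sy]; exists y; split; first by split => //; apply: (hsupp n).
  by rewrite hsuppin //; split => //; apply: (hsupp n).
have GTLZ : GT `<=` GL `|` Z.
  move=> q [[U [[V [oV ->]] [Vq _] fin]] e].
  case: (pselect (L q.1)) => Lq; last by right; split => //; rewrite e hsum.
  left; split => //; exists (V `&` L); split => //; first by exists V.
  apply: sub_finite_set fin => n /= [y [[Vy Ly]]].
  rewrite (hsuppin L n) // => -[_ sy]; exists y; split => //.
  by rewrite hsuppin //.
have contfst : continuous (fst : K * R -> K) by move=> p; exact: cvg_fst.
have contsnd : continuous (snd : K * R -> R) by move=> p; exact: cvg_snd.
have clGL : closure GL `<=` (fst : K * R -> K) @^-1` L.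
  have cl : closed ((fst : K * R -> K) @^-1` L) by exact: (proj1 (continuous_closedP _) contfst L hL).
  rewrite [X in _ `<=` X](closure_id _).1 //; apply: closureS.
  by move=> q [[U [[V [_ ->]] [_ Lq] _]] _].
have clZ : closure Z `<=` closure (~` L) `*` [set (0 : R)].
  have cl : closed ((fst : K * R -> K) @^-1` closure (~` L) `&` (snd : K * R -> R) @^-1` [set (0:R)]).
    apply: closedI.
      exact: (proj1 (continuous_closedP _) contfst _ (@closed_closure _ _)).
    exact: (proj1 (continuous_closedP _) contsnd [set x | x = 0] (@closed_eq R 0)).
  move=> q /(closureS _) => /(_ _ _) h.
  have := (closure_id _).1 cl; move=> eq.
  have : ((fst : K * R -> K) @^-1` closure (~` L) `&` (snd : K * R -> R) @^-1` [set (0:R)]) q.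
    rewrite eq; apply: h => r [nL e]; split => //; exact: subset_closure.
  by [].
apply/seteqP; split.
  move=> p [[_ h01] cl].
  have : closure (GL `|` Z) p by exact: (closureS GTLZ).
  rewrite closureU => -[h|h]; [left|right].
    by split => //; split => //; exact: clGL.
  exact: clZ.
move=> p [[[Lp h01] cl]|[c0 e0]].
  by split => //; exact: (closureS GLT).
split; first by split => //; rewrite e0 lexx ler01.
move=> B /= nB.
case: nB => -[A1 A2] /= [nA1 nA2] sub.
have [y [nLy A1y]] := c0 A1 nA1.
exists (y, 0); split; last first.
  apply: sub; split => //=; rewrite -e0; exact: nbhs_singleton.
split => /=; last by rewrite hsum.
exists (~` L); split => //; first by exists (~` L); split; [exact: closed_openC|rewrite setIT].
rewrite (_ : [set n | _] = set0); first exact: finite_set0.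
apply/seteqP; split => n //= [z [nLz]].
by rewrite hsuppin // => -[_ /(hsupp n)].
Qed.
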